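(* Let $\mathcal{S}\subseteq \mathsf{mod}\Lambda$ be a Serre subcategory. Then $\mathcal{S}$ is both a left finite wide subcategory and a right finite wide subcategory.
   Context: $\Lambda$ is a basic finite-dimensional algebra over a field, $\mathsf{mod}\Lambda$ finitely generated left modules. A Serre subcategory is closed under extensions, submodules and quotients. A wide subcategory is closed under extensions, kernels, cokernels. For a torsion class $\mathcal T$ (closed under extensions and quotients), $\mathcal W_L(\mathcal T)=\{X\in\mathcal T\mid\forall Y\in\mathcal T, f:Y\to X:\ \ker f\in\mathcal T\}$; for a torsion-free class $\mathcal F$ (closed under extensions and submodules), $\mathcal W_R(\mathcal F)=\{X\in\mathcal F\mid\forall Y\in\mathcal F, f:X\to Y:\ \mathrm{coker} f\in\mathcal F\}$. A wide subcategory is left finite (resp. right finite) if it equals $\mathcal W_L(\mathcal T)$ for a functorially finite torsion class $\mathcal T$ (resp. $\mathcal W_R(\mathcal F)$ for a functorially finite torsion-free class $\mathcal F$); functorially finite means every module has left and right approximations by the subcategory. *)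

(* Defs.v *)
(* Finite-dimensional modules over a finite-dimensional
   algebra, encoded as matrix representations (row-vector convention). *)
From HB Require Import structures.
From mathcomp Require Import all_boot all_order all_algebra.
From mathcomp Require Import falgebra.
Set Implicit Arguments. Unset Strict Implicit. Unset Printing Implicit Defensive.
Import GRing.Theory.
Local Open Scope ring_scope.

Section Modules.
Variables (F : fieldType) (L : falgType F).

(* A finitely generated (= finite-dimensional) left L-module: an F-vector
   space F^n (row vectors) with a  acting by  v |-> v *m act a.
   Left-module law a.(b.v) = (ab).v means act (a*b) = act b *m act a. *)
Record module := Module {
  mdim : nat;
  act : L -> 'M[F]_mdim;
  act_lin : forall (c : F) (a b : L), act (c *: a + b) = c *: act a + act b;
  act_one : act 1 = 1%:M;
  act_mul : forall a b : L, act (a * b) = act b *m act a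
}.

(* L-module homomorphisms X -> Y, as matrices acting on row vectors;
   composition X -f-> Y -g-> Z is f *m g. *)
Definition hom (X Y : module) (f : 'M[F]_(mdim X, mdim Y)) : Prop :=
  forall a : L, act X a *m f = f *m act Y a.

Definition iso (X Y : module) : Prop :=
  exists (f : 'M[F]_(mdim X, mdim Y)) (g : 'M[F]_(mdim Y, mdim X)),
    [/\ hom f, hom g, f *m g = 1%:M & g *m f = 1%:M].

Definition mono m n (f : 'M[F]_(m, n)) : Prop := (kermx f == (0 : 'M[F]_m))%MS.
Definition epi m n (f : 'M[F]_(m, n)) : Prop := row_full f.

Definition is_kernel k x y (i : 'M[F]_(k, x)) (f : 'M[F]_(x, y)) : Prop :=
  mono i /\ (i == kermx f)%MS.
Definition is_cokernel x y c (f : 'M[F]_(x, y)) (p : 'M[F]_(y, c)) : Prop :=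
  epi p /\ (kermx p == f)%MS.

Definition short_exact x y z (f : 'M[F]_(x, y)) (g : 'M[F]_(y, z)) : Prop :=
  [/\ mono f, (f == kermx g)%MS & epi g].

(* A subcategory of mod L: a class of modules, closed under isomorphisms
   and containing the zero module (full subcategories are determined by
   their objects). *)
Definition subcat (S : module -> Prop) : Prop :=
  (forall X Y, iso X Y -> S X -> S Y) /\ (exists Z, mdim Z = 0%N /\ S Z).

Definition ext_closed (S : module -> Prop) : Prop :=
  forall (X Y Z : module) (f : 'M[F]_(mdim X, mdim Y)) (g : 'M[F]_(mdim Y, mdim Z)),
    hom f -> hom g -> short_exact f g -> S X -> S Z -> S Y.

Definition sub_closed (S : module -> Prop) : Prop :=
  forall (X Y : module) (i : 'M[F]_(mdim X, mdim Y)),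
    hom i -> mono i -> S Y -> S X.

Definition quot_closed (S : module -> Prop) : Prop :=
  forall (Y Z : module) (p : 'M[F]_(mdim Y, mdim Z)),
    hom p -> epi p -> S Y -> S Z.

Definition ker_closed (S : module -> Prop) : Prop :=
  forall (X Y : module) (f : 'M[F]_(mdim X, mdim Y)), hom f -> S X -> S Y ->
    exists (K : module) (i : 'M[F]_(mdim K, mdim X)), [/\ S K, hom i & is_kernel i f].

Definition coker_closed (S : module -> Prop) : Prop :=
  forall (X Y : module) (f : 'M[F]_(mdim X, mdim Y)), hom f -> S X -> S Y ->
    exists (C : module) (p : 'M[F]_(mdim Y, mdim C)), [/\ S C, hom p & is_cokernel f p].

Definition serre (S : module -> Prop) : Prop :=
  [/\ subcat S, ext_closed S, sub_closed S & quot_closed S].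

Definition wide (S : module -> Prop) : Prop :=
  [/\ subcat S, ext_closed S, ker_closed S & coker_closed S].

Definition torsion_class (T : module -> Prop) : Prop :=
  [/\ subcat T, ext_closed T & quot_closed T].

Definition torsionfree_class (T : module -> Prop) : Prop :=
  [/\ subcat T, ext_closed T & sub_closed T].

Definition left_approx (T : module -> Prop) (M : module) : Prop :=
  exists (T0 : module) (f : 'M[F]_(mdim M, mdim T0)),
    [/\ T T0, hom f &
     forall (T1 : module) (g : 'M[F]_(mdim M, mdim T1)), T T1 -> hom g ->
       exists h : 'M[F]_(mdim T0, mdim T1), hom h /\ g = f *m h].

Definition right_approx (T : module -> Prop) (M : module) : Prop :=
  exists (T0 : module) (f : 'M[F]_(mdim T0, mdim M)),
    [/\ T T0, hom f &
     forall (T1 : module) (g : 'M[F]_(mdim T1, mdim M)), T T1 -> hom g ->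
       exists h : 'M[F]_(mdim T1, mdim T0), hom h /\ g = h *m f].

Definition functorially_finite (T : module -> Prop) : Prop :=
  forall M : module, left_approx T M /\ right_approx T M.

Definition W_L (T : module -> Prop) (X : module) : Prop :=
  T X /\ forall (Y : module) (f : 'M[F]_(mdim Y, mdim X)), T Y -> hom f ->
    exists (K : module) (i : 'M[F]_(mdim K, mdim Y)), [/\ T K, hom i & is_kernel i f].

Definition W_R (T : module -> Prop) (X : module) : Prop :=
  T X /\ forall (Y : module) (f : 'M[F]_(mdim X, mdim Y)), T Y -> hom f ->
    exists (C : module) (p : 'M[F]_(mdim Y, mdim C)), [/\ T C, hom p & is_cokernel f p].

Definition left_finite_wide (W : module -> Prop) : Prop :=
  wide W /\ exists T, [/\ torsion_class T, functorially_finite T &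
                          forall X, W X <-> W_L T X].

Definition right_finite_wide (W : module -> Prop) : Prop :=
  wide W /\ exists T, [/\ torsionfree_class T, functorially_finite T &
                          forall X, W X <-> W_R T X].

End Modules.

(* Basic algebra: no two nonzero orthogonal idempotents e, e' are equivalent
   (equivalently L e and L e' are never isomorphic; i.e. in a decomposition of
   L into indecomposable projectives no summand is repeated). *)
Definition idempotent (R : nzRingType) (e : R) : Prop := e * e = e.
Definition basic_algebra (F : fieldType) (L : falgType F) : Prop :=
  forall e e' : L, idempotent e -> idempotent e' -> e != 0 -> e' != 0 ->
    e * e' = 0 -> e' * e = 0 ->
    ~ (exists a b : L, [/\ a = e * a * e', b = e' * b * e, a * b = e & b * a = e']).

(* Main.v *)
Require Import Defs.
From mathcomp Require Import all_boot all_order all_algebra.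
From mathcomp Require Import falgebra.
From Stdlib Require Import Classical.
Set Implicit Arguments. Unset Strict Implicit. Unset Printing Implicit Defensive.
Import GRing.Theory.
Local Open Scope ring_scope.

Lemma ex_max_prop (P : nat -> Prop) m : (exists i, P i) -> (forall i, P i -> (i <= m)%N) ->
  exists i, P i /\ forall j, P j -> (j <= i)%N.
Proof.
elim: m => [|m IH] [i Pi] ub.
  exists i; split => // j Pj.
  by move: (ub j Pj); rewrite leqn0 => /eqP ->.
case: (classic (P m.+1)) => [Pm|nPm].
  by exists m.+1; split => // j /ub.
apply: IH; first by exists i.
move=> k Pk; move: (ub k Pk); rewrite leq_eqVlt => /orP [/eqP e|//].
by subst k.
Qed.

Lemma ex_min_prop (P : nat -> Prop) : (exists i, P i) ->
  exists i, P i /\ forall j, P j -> (i <= j)%N.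
Proof.
move=> [n Pn].
pose Q := fun i => forall j, P j -> (i <= j)%N.
have Q0 : exists i, Q i by exists 0%N => j _; exact: leq0n.
have [i [Qi maxi]] := @ex_max_prop Q n Q0 (fun i Qi => Qi n Pn).
exists i; split => //.
case: (classic (P i)) => // nPi; exfalso.
have Qi1 : Q i.+1.
  move=> j Pj; rewrite ltn_neqAle Qi // andbT.
  by apply/negP => /eqP e; subst j.
by have := maxi _ Qi1; rewrite ltnn.
Qed.

Section Aux.
Variables (F : fieldType) (L : falgType F).
Local Notation module := (module L).

Section Sub.
Variables (X : module) (k : nat) (i : 'M[F]_(k, mdim X)).
Hypothesis ifree : row_free i.
Hypothesis istab : forall a, (i *m act X a <= i)%MS.

Definition sact a := i *m act X a *m pinvmx i.

Lemma i_pinv : i *m pinvmx i = 1%:M.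
Proof. apply: (row_free_inj ifree). by rewrite /= mul1mx mulmxKpV. Qed.

Lemma sact_lin (c : F) (a b : L) : sact (c *: a + b) = c *: sact a + sact b.
Proof. by rewrite /sact act_lin mulmxDr mulmxDl -scalemxAr -scalemxAl. Qed.

Lemma sact_one : sact 1 = 1%:M.
Proof. by rewrite /sact act_one mulmx1 i_pinv. Qed.

Lemma sact_mul a b : sact (a * b) = sact b *m sact a.
Proof.
have HK : i *m act X b *m pinvmx i *m i = i *m act X b := mulmxKpV (istab b).
by rewrite /sact act_mul (mulmxA _ (i *m act X a)) (mulmxA _ i) HK mulmxA.
Qed.

Definition subm : module := Module sact_lin sact_one sact_mul.

Lemma subm_hom : @Defs.hom F L subm X i.
Proof. by move=> a; rewrite /= /sact mulmxKpV. Qed.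
End Sub.

Section Quot.
Variables (Y : module) (c : nat) (p : 'M[F]_(mdim Y, c)).
Hypothesis pfull : row_full p.
Hypothesis pstab : forall a, (kermx p *m act Y a <= kermx p)%MS.

Definition qact a := pinvmx p *m act Y a *m p.

Lemma pinv_p : pinvmx p *m p = 1%:M.
Proof. by rewrite -[pinvmx p]mul1mx mulmxKpV // submx_full. Qed.

Lemma key a : p *m pinvmx p *m act Y a *m p = act Y a *m p.
Proof.
apply/eqP; rewrite -subr_eq0.
have -> : p *m pinvmx p *m act Y a *m p - act Y a *m p = (p *m pinvmx p - 1%:M) *m (act Y a *m p).
  by rewrite mulmxBl mul1mx !mulmxA.
rewrite mulmxA -sub_kermx.
apply: submx_trans (pstab a); apply: submxMr.
by rewrite sub_kermx mulmxBl mul1mx -mulmxA pinv_p mulmx1 subrr.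
Qed.

Lemma qact_lin (d : F) (a b : L) : qact (d *: a + b) = d *: qact a + qact b.
Proof. by rewrite /qact act_lin mulmxDr mulmxDl -scalemxAr -scalemxAl. Qed.

Lemma qact_one : qact 1 = 1%:M.
Proof. by rewrite /qact act_one mulmx1 pinv_p. Qed.

Lemma qact_mul a b : qact (a * b) = qact b *m qact a.
Proof.
have K2 : p *m (pinvmx p *m act Y a *m p) = act Y a *m p.
  by rewrite -key !mulmxA.
by rewrite /qact act_mul -(mulmxA (pinvmx p *m act Y b) p) K2 !mulmxA.
Qed.

Definition quotm : module := Module qact_lin qact_one qact_mul.

Lemma quotm_hom : @Defs.hom F L Y quotm p.
Proof. move=> a /=; rewrite -key /qact !mulmxA. done. Qed.
End Quot.


Lemma pinv_full m c (p : 'M[F]_(m, c)) : row_full p -> pinvmx p *m p = 1%:M.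
Proof. by move=> pf; rewrite -[pinvmx p]mul1mx mulmxKpV // submx_full. Qed.

Lemma zero_mono m n (i : 'M[F]_(m, n)) : kermx i = 0 -> mono i.
Proof. by rewrite /mono => ->; apply/andP; split; apply: submx_refl. Qed.

Lemma free_mono m n (i : 'M[F]_(m, n)) : row_free i -> mono i.
Proof. by rewrite -kermx_eq0 => /eqP; apply: zero_mono. Qed.

Section Image.
Variables (A M : module) (g : 'M[F]_(mdim A, mdim M)).
Hypothesis hg : Defs.hom g.

Lemma im_stab a : (row_base g *m act M a <= row_base g)%MS.
Proof.
have h1 : (row_base g <= g)%MS by rewrite eq_row_base.
by rewrite eq_row_base; apply: submx_trans (submxMr _ h1) _; rewrite -hg submxMl.
Qed.

Definition imm : module := subm (row_base_free g) im_stab.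
Definition ime : 'M[F]_(mdim A, mdim imm) := g *m pinvmx (row_base g).

Lemma ime_rb : ime *m row_base g = g.
Proof. by rewrite /ime mulmxKpV // eq_row_base. Qed.

Lemma ime_hom : Defs.hom ime.
Proof.
move=> a /=; rewrite /sact 2!mulmxA ime_rb /ime mulmxA hg. done.
Qed.

Lemma ime_epi : row_full ime.
Proof.
rewrite /row_full eqn_leq rank_leq_col /=.
by rewrite -{1}ime_rb mxrankM_maxl.
Qed.

Lemma imi_hom : @Defs.hom F L imm M (row_base g).
Proof. exact: subm_hom. Qed.
End Image.

Section Sum.
Variables (A B : module).
Definition dact a : 'M[F]_(mdim A + mdim B) := block_mx (act A a) 0 0 (act B a).

Lemma dact_lin (c : F) (a b : L) : dact (c *: a + b) = c *: dact a + dact b.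
Proof. by rewrite /dact scale_block_mx add_block_mx !scaler0 !addr0 !act_lin. Qed.

Lemma dact_one : dact 1 = 1%:M.
Proof. by rewrite /dact !act_one scalar_mx_block. Qed.

Lemma dact_mul a b : dact (a * b) = dact b *m dact a.
Proof.
by rewrite /dact mulmx_block !act_mul !mulmx0 !mul0mx !addr0 !add0r.
Qed.

Definition summ : module := Module dact_lin dact_one dact_mul.

Definition inl_mx : 'M[F]_(mdim A, mdim summ) := row_mx 1%:M 0.
Definition prr_mx : 'M[F]_(mdim summ, mdim B) := col_mx 0 1%:M.

Lemma inl_hom : Defs.hom inl_mx.
Proof.
move=> a; rewrite /= /inl_mx /dact mul_mx_row mul_row_block.
by rewrite !mulmx1 !mulmx0 !mul1mx !mul0mx addr0 add0r.
Qed.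

Lemma prr_hom : Defs.hom prr_mx.
Proof.
move=> a; rewrite /= /prr_mx /dact mul_block_col mul_col_mx.
by rewrite !mulmx1 !mulmx0 !mul1mx !mul0mx addr0 add0r.
Qed.

Lemma sum_ses : short_exact inl_mx prr_mx.
Proof.
split.
- rewrite /mono.
  have H := mulmx_ker inl_mx; rewrite /inl_mx mul_mx_row mulmx1 mulmx0 in H.
  move: H; rewrite -[X in _ = X]row_mx0 /inl_mx => /eq_row_mx [-> _].
  by apply/andP; split; apply: submx_refl.
- apply/andP; split.
    by rewrite sub_kermx /inl_mx /prr_mx mul_row_col mulmx0 mul0mx addr0.
  set K := kermx prr_mx.
  have HK : K *m prr_mx = 0 by rewrite mulmx_ker.
  rewrite -[K]hsubmxK /prr_mx mul_row_col mulmx0 add0r mulmx1 in HK.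
  rewrite -[K]hsubmxK HK /inl_mx.
  have -> : row_mx (lsubmx K) (0 : 'M_(mdim summ, mdim B)) = lsubmx K *m row_mx 1%:M 0.
    by rewrite mul_mx_row mulmx1 mulmx0.
  exact: submxMl.
- apply/row_fullP; exists (row_mx 0 1%:M).
  by rewrite /prr_mx mul_row_col mulmx0 mul1mx add0r.
Qed.
End Sum.


Section SerreSec.
Variable S : module -> Prop.
Hypothesis hS : serre S.

Lemma S_sub : sub_closed S. Proof. by case: hS. Qed.
Lemma S_quot : quot_closed S. Proof. by case: hS. Qed.
Lemma S_ext : ext_closed S. Proof. by case: hS. Qed.
Lemma S_subcat : subcat S. Proof. by case: hS. Qed.

Lemma S_sum A B : S A -> S B -> S (summ A B).
Proof.
move=> SA SB; exact: (@S_ext A (summ A B) B (inl_mx A B) (prr_mx A B) (inl_hom A B) (prr_hom A B) (sum_ses A B)).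
Qed.

Lemma S_im_src A M (g : 'M[F]_(mdim A, mdim M)) (hg : Defs.hom g) : S A -> S (imm hg).
Proof. by move=> SA; apply: (@S_quot A (imm hg) (ime hg) (ime_hom hg) (ime_epi hg)). Qed.

Lemma S_im_tgt A M (g : 'M[F]_(mdim A, mdim M)) (hg : Defs.hom g) : S M -> S (imm hg).
Proof.
move=> SM; apply: (@S_sub (imm hg) M (row_base g) (imi_hom hg)) => //.
exact/free_mono/row_base_free.
Qed.

Lemma S_ker : ker_closed S.
Proof.
move=> X Y f hf SX SY.
have stab a : (row_base (kermx f) *m act X a <= row_base (kermx f))%MS.
  have h1 : (row_base (kermx f) <= kermx f)%MS by rewrite eq_row_base.
  rewrite eq_row_base; apply: submx_trans (submxMr _ h1) _.
  by rewrite sub_kermx -mulmxA hf mulmxA mulmx_ker mul0mx.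
exists (subm (row_base_free (kermx f)) stab), (row_base (kermx f)); split.
- apply: (@S_sub (subm (row_base_free (kermx f)) stab) X (row_base (kermx f)) (subm_hom _ _)) => //.
  exact/free_mono/row_base_free.
- exact: subm_hom.
- split; first exact/free_mono/row_base_free.
  by apply/eqmxP; apply: eq_row_base.
Qed.

Lemma S_coker : coker_closed S.
Proof.
move=> X Y f hf SX SY.
set p := col_base (cokermx f).
have pfull : row_full p by apply: col_base_full.
have kerp u : (u *m p == 0) = (u <= f)%MS.
  rewrite submxE; apply/eqP/eqP => [H|H].
    by rewrite -(mulmx_base (cokermx f)) mulmxA H mul0mx.
  apply: (row_free_inj (row_base_free (cokermx f))).
  by rewrite /= mul0mx -mulmxA mulmx_base H.
have E : (kermx p == f)%MS.
  apply/andP; split; first by rewrite -kerp mulmx_ker.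
  by rewrite sub_kermx kerp.
have stab a : (kermx p *m act Y a <= kermx p)%MS.
  rewrite (eqmxMr _ (eqmxP E)) (eqmxP E) -hf; exact: submxMl.
exists (quotm pfull stab), p; split.
- exact: (@S_quot Y (quotm pfull stab) p (quotm_hom _ _) pfull).
- exact: quotm_hom.
- by split.
Qed.

Lemma hom0 (X Y : module) : @Defs.hom F L X Y 0.
Proof. by move=> a; rewrite mulmx0 mul0mx. Qed.

Lemma S_right M : right_approx S M.
Proof.
pose P r := exists (A : module) (g : 'M[F]_(mdim A, mdim M)), [/\ S A, Defs.hom g & \rank g = r].
have [Z [_ SZ]] := (S_subcat).2.
have P0 : exists r, P r by exists 0%N, Z, 0; split => //; [exact: hom0 | exact: mxrank0].
have ub : forall r, P r -> (r <= mdim M)%N.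
  by move=> r [A [g [_ _ <-]]]; exact: rank_leq_col.
have [r [[A0 [g0 [SA0 hg0 rg0]]] maxr]] := ex_max_prop P0 ub.
exists (imm hg0), (row_base g0); split.
- exact: S_im_src.
- exact: imi_hom.
move=> T1 g ST1 hg.
set psi : 'M_(mdim (summ A0 T1), mdim M) := col_mx g0 g.
have hpsi : Defs.hom psi.
  move=> a /=; rewrite /dact /psi mul_block_col mul_col_mx !mul0mx addr0 add0r.
  by rewrite hg hg0.
have Ppsi : P (\rank psi) by exists (summ A0 T1), psi; split => //; exact: S_sum.
have le1 := maxr _ Ppsi.
have sub1 : (g0 <= psi)%MS by rewrite /psi -addsmxE addsmxSl.
have : (psi <= g0)%MS.
  have [_ <-] := mxrank_leqif_sup sub1.
  by rewrite eqn_leq mxrankS // rg0.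
rewrite col_mx_sub => /andP [_ sg].
have sg' : (g <= row_base g0)%MS by rewrite eq_row_base.
exists (g *m pinvmx (row_base g0)); split; last by rewrite mulmxKpV.
move=> a /=; rewrite /sact.
rewrite (mulmxA (act T1 a) g) hg.
rewrite (mulmxA (g *m pinvmx (row_base g0)) (row_base g0 *m act M a)).
by rewrite (mulmxA (g *m pinvmx (row_base g0)) (row_base g0)) (mulmxKpV sg').
Qed.

Lemma S_left M : left_approx S M.
Proof.
pose P r := exists (A : module) (phi : 'M[F]_(mdim M, mdim A)),
  [/\ S A, Defs.hom phi & \rank (kermx phi) = r].
have [Z [_ SZ]] := (S_subcat).2.
have P0 : exists r, P r by exists (\rank (kermx (0 : 'M[F]_(mdim M, mdim Z)))), Z, 0; split => //; exact: hom0.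
have [r [[A0 [phi [SA0 hphi rphi]]] minr]] := ex_min_prop P0.
exists (imm hphi), (ime hphi); split.
- exact: S_im_tgt.
- exact: ime_hom.
move=> T1 g ST1 hg.
set psi : 'M_(mdim M, mdim (summ A0 T1)) := row_mx phi g.
have hpsi : Defs.hom psi.
  move=> a /=; rewrite /dact /psi mul_row_block mul_mx_row !mulmx0 addr0 add0r.
  by rewrite hphi hg.
have [K1 K2] : kermx psi *m phi = 0 /\ kermx psi *m g = 0.
  by have := mulmx_ker psi; rewrite /psi mul_mx_row -[X in _ = X]row_mx0 => /eq_row_mx.
have Ppsi : P (\rank (kermx psi)) by exists (summ A0 T1), psi; split => //; exact: S_sum.
have le1 := minr _ Ppsi.
have sub1 : (kermx psi <= kermx phi)%MS by rewrite sub_kermx K1.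
have sub2 : (kermx phi <= kermx psi)%MS.
  have [_ <-] := mxrank_leqif_sup sub1.
  by rewrite eqn_leq mxrankS // rphi.
have subg : (kermx phi <= kermx g)%MS.
  by apply: submx_trans sub2 _; rewrite sub_kermx K2.
set e := ime hphi.
set q := pinvmx e.
have qe : q *m e = 1%:M := pinv_full (ime_epi hphi).
have ekg : (kermx e <= kermx g)%MS.
  apply: submx_trans subg; rewrite sub_kermx.
  have Hk : kermx e *m (e *m row_base phi) = 0 by rewrite mulmxA mulmx_ker mul0mx.
  by rewrite (ime_rb hphi) in Hk; rewrite Hk.
have eqg : e *m q *m g = g.
  apply/eqP; rewrite -subr_eq0 -[X in _ - X]mul1mx -mulmxBl -sub_kermx.
  apply: submx_trans ekg; rewrite sub_kermx mulmxBl mul1mx -mulmxA qe mulmx1 subrr //.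
exists (q *m g); split; last by rewrite mulmxA eqg.
move=> a.
have actI : act (imm hphi) a = q *m act M a *m e.
  by rewrite -(mulmxA q) (ime_hom hphi a) (mulmxA q) qe mul1mx.
have E1 : (q *m act M a *m e) *m (q *m g) = q *m act M a *m (e *m q *m g).
  by rewrite !mulmxA.
by rewrite actI E1 eqg -(mulmxA q g) -hg mulmxA.
Qed.

End SerreSec.

End Aux.

Unset Implicit Arguments.
Theorem corollary3p8 (F : fieldType) (L : falgType F) (S : module L -> Prop) :
  basic_algebra L -> serre S -> left_finite_wide S /\ right_finite_wide S.
Proof.
move=> _ hS.
have W : wide S := And4 (S_subcat hS) (S_ext hS) (S_ker hS) (S_coker hS).
have FF : functorially_finite S := fun M => conj (S_left hS M) (S_right hS M).
split; split => //; exists S; split => //.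
- by split; [exact: S_subcat hS | exact: S_ext hS | exact: S_quot hS].
- move=> X; split => [SX|[]//]; split => // Y f SY hf.
  exact: (S_ker hS hf SY SX).
- by split; [exact: S_subcat hS | exact: S_ext hS | exact: S_sub hS].
- move=> X; split => [SX|[]//]; split => // Y f SY hf.
  exact: (S_coker hS hf SX SY).
Qed.
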